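(* Any robust protocol over an erasure channel has a fixed order of speaking.
   Context: An erasure channel over alphabet $\Sigma$ is a channel $\Sigma\to\Sigma\cup\{\bot\}$ in which the adversary may only replace a transmitted symbol by the erasure mark $\bot$; there is no feedback. In each round exactly one party (Alice, holding input $x$, or Bob, holding input $y$) sends one symbol. A protocol is robust if (1) for all inputs it runs for a fixed number $N$ of rounds and (2) at every round, for all inputs and every possible erasure pattern, the parties agree on who speaks next. It has a fixed order of speaking if there is a function $g:\mathbb{N}\to\{\text{Alice},\text{Bob}\}$ such that the speaker at round $i$ is $g(i)$, independent of the inputs and of the erasure pattern. *)

(* Defs.v *)
From mathcomp Require Import all_boot.
Set Implicit Arguments. Unset Strict Implicit. Unset Printing Implicit Defensive.

(* Parties: a speaker is encoded as a bool, [true] = Alice, [false] = Bob.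
   Erasure channel over alphabet Sigma: a received symbol is an
   [option Sigma], where [None] is the erasure mark _|_ .

   A party's view is the chronological
   sequence of symbols it has recorded so far (one entry per past round: the
   symbol it sent if it spoke, otherwise what it received, possibly None).
   The round index is [size view].
   - [a_turn x va]  : Alice's belief "Alice speaks in the next round".
   - [b_turn y vb]  : Bob's belief   "Alice speaks in the next round".
   - [a_msg x va], [b_msg y vb] : the symbol sent when speaking. *)
Record protocol (X Y Sigma : Type) := Protocol {
  a_turn : X -> seq (option Sigma) -> bool;
  b_turn : Y -> seq (option Sigma) -> bool;
  a_msg  : X -> seq (option Sigma) -> Sigma;
  b_msg  : Y -> seq (option Sigma) -> Sigma
}.

(* An erasure pattern: [e i = true] iff the adversary erases the symbol
   transmitted in round i.  Arbitrary patterns are allowed. *)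
Definition erasure_pattern := nat -> bool.

(* The
   behaviour in case of disagreement is irrelevant for robust protocols. *)
Fixpoint views X Y Sigma (P : protocol X Y Sigma) (x : X) (y : Y)
    (e : erasure_pattern) (i : nat) : seq (option Sigma) * seq (option Sigma) :=
  match i with
  | 0 => ([::], [::])
  | i'.+1 =>
      let: (va, vb) := views P x y e i' in
      let ta := a_turn P x va in
      let tb := b_turn P y vb in
      let sa := a_msg P x va in
      let sb := b_msg P y vb in
      let ea := if ta then Some sa
                else if ~~ tb && ~~ e i' then Some sb else None in
      let eb := if ~~ tb then Some sb
                else if ta && ~~ e i' then Some sa else None in
      (rcons va ea, rcons vb eb)
  end.

(* The speaker in round i (0-based): the party Alice believes speaks
   (for robust protocols both parties agree on it). *)
Definition speaker X Y Sigma (P : protocol X Y Sigma) x y e i : bool :=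
  a_turn P x (views P x y e i).1.

Definition robust X Y Sigma (P : protocol X Y Sigma) (N : nat) : Prop :=
  forall (x : X) (y : Y) (e : erasure_pattern) (i : nat), i < N ->
    a_turn P x (views P x y e i).1 = b_turn P y (views P x y e i).2.

Definition fixed_order X Y Sigma (P : protocol X Y Sigma) (N : nat) : Prop :=
  exists g : nat -> bool, forall (x : X) (y : Y) (e : erasure_pattern) (i : nat),
    i < N -> speaker P x y e i = g i.

(* Main.v *)
Require Import Defs.
From mathcomp Require Import all_boot.
From Stdlib Require Import Classical.

Section Proofs.
Variables (X Y Sigma : Type) (P : protocol X Y Sigma).

Lemma views_S x y e i :
  views P x y e i.+1 =
  (rcons (views P x y e i).1
     (if a_turn P x (views P x y e i).1 then Some (a_msg P x (views P x y e i).1)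
      else if ~~ b_turn P y (views P x y e i).2 && ~~ e i
           then Some (b_msg P y (views P x y e i).2) else None),
   rcons (views P x y e i).2
     (if ~~ b_turn P y (views P x y e i).2 then Some (b_msg P y (views P x y e i).2)
      else if a_turn P x (views P x y e i).1 && ~~ e i
           then Some (a_msg P x (views P x y e i).1) else None)).
Proof. by rewrite /=; case: (views P x y e i). Qed.

Lemma views_ext x y e e' i :
  (forall j, j < i -> e j = e' j) -> views P x y e i = views P x y e' i.
Proof.
elim: i => [|i IH] H //.
rewrite !views_S IH; last by move=> j Hj; apply: H; apply: ltnW.
by rewrite H.
Qed.

Lemma LA (s : nat -> bool) x y y' e e' k d :
  (views P x y e k).1 = (views P x y' e' k).1 ->
  (forall j, k <= j < k + d ->
     [/\ a_turn P x (views P x y e j).1 = s j, b_turn P y (views P x y e j).2 = s j,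
         a_turn P x (views P x y' e' j).1 = s j & b_turn P y' (views P x y' e' j).2 = s j]) ->
  (forall j, k <= j < k + d -> s j = false -> e j /\ e' j) ->
  (views P x y e (k + d)).1 = (views P x y' e' (k + d)).1.
Proof.
move=> Hk; elim: d => [|d IH] Ht He; first by rewrite addn0.
have Hj : k <= k + d < k + d.+1 by rewrite leq_addr addnS ltnSn.
rewrite addnS !views_S /=.
have IH' : (views P x y e (k + d)).1 = (views P x y' e' (k + d)).1.
  apply: IH.
  - by move=> j /andP[H1 H2]; apply: Ht; rewrite H1 addnS ltnW.
  - by move=> j /andP[H1 H2]; apply: He; rewrite H1 addnS ltnW.
have [h1 h2 h3 h4] := Ht _ Hj.
rewrite -IH' in h3 *.
rewrite h1 h2 h4.
case Es: (s (k + d)) => //.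
by have [-> ->] := He _ Hj Es.
Qed.

Lemma LB (s : nat -> bool) x x' y e e' k d :
  (views P x y e k).2 = (views P x' y e' k).2 ->
  (forall j, k <= j < k + d ->
     [/\ a_turn P x (views P x y e j).1 = s j, b_turn P y (views P x y e j).2 = s j,
         a_turn P x' (views P x' y e' j).1 = s j & b_turn P y (views P x' y e' j).2 = s j]) ->
  (forall j, k <= j < k + d -> s j = true -> e j /\ e' j) ->
  (views P x y e (k + d)).2 = (views P x' y e' (k + d)).2.
Proof.
move=> Hk; elim: d => [|d IH] Ht He; first by rewrite addn0.
have Hj : k <= k + d < k + d.+1 by rewrite leq_addr addnS ltnSn.
rewrite addnS !views_S /=.
have IH' : (views P x y e (k + d)).2 = (views P x' y e' (k + d)).2.
  apply: IH.
  - by move=> j /andP[H1 H2]; apply: Ht; rewrite H1 addnS ltnW.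
  - by move=> j /andP[H1 H2]; apply: He; rewrite H1 addnS ltnW.
have [h1 h2 h3 h4] := Ht _ Hj.
rewrite -IH' in h4 *.
rewrite h1 h3 h2.
case Es: (s (k + d)) => //.
by have [-> ->] := He _ Hj Es.
Qed.

Definition Ek (f : erasure_pattern) (k : nat) : erasure_pattern :=
  fun j => if j < k then f j else true.

Lemma step N (HR : robust P N) i (Hi : i < N)
  (IH : forall j, j < i -> forall x y e x' y' e', speaker P x y e j = speaker P x' y' e' j) :
  forall x y e x' y' e', speaker P x y e i = speaker P x' y' e' i.
Proof.
move=> x y e x' y' e'.
pose s j := speaker P x y (fun _ => true) j.
have turns : forall a b f j, j < i ->
   a_turn P a (views P a b f j).1 = s j /\ b_turn P b (views P a b f j).2 = s j.
  move=> a b f j Hj; have Ha : a_turn P a (views P a b f j).1 = s j by apply: IH.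
  split=> //; rewrite -HR //; exact: ltn_trans Hj Hi.
have turnsR : forall a b f a' b' f' k j, k <= j < k + (i - k) -> k <= i ->
   [/\ a_turn P a (views P a b f j).1 = s j, b_turn P b (views P a b f j).2 = s j,
       a_turn P a' (views P a' b' f' j).1 = s j & b_turn P b' (views P a' b' f' j).2 = s j].
  move=> a b f a' b' f' k j /andP[_ H2] Hk; rewrite subnKC // in H2.
  by have [? ?] := turns a b f j H2; have [? ?] := turns a' b' f' j H2.
have chain : forall a b f k, k <= i -> speaker P a b (Ek f k) i = speaker P a b (Ek f 0) i.
  move=> a b f; elim=> [|k IHk] Hk //.
  rewrite -IHk; last exact: ltnW.
  have Hv : views P a b (Ek f k.+1) k = views P a b (Ek f k) k.
    by apply: views_ext => j Hj; rewrite /Ek Hj (ltn_trans Hj (ltnSn k)).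
  have Hki : k <= i by exact: ltnW.
  case Esk: (s k).
  - rewrite /speaker; congr (a_turn P a _); rewrite -(subnKC Hki).
    apply: (LA s) => //; first by rewrite Hv.
      by move=> j Hj; exact: (turnsR _ _ _ _ _ _ k j Hj Hki).
    move=> j /andP[H1 _] Hs; rewrite /Ek.
    have Hkj : k < j by rewrite ltn_neqAle H1 andbT; apply/eqP=> Ekj; rewrite Ekj Hs in Esk.
    by rewrite ltnNge Hkj /= ltnNge (ltnW Hkj).
  - rewrite /speaker HR // [in RHS]HR //.
    congr (b_turn P b _); rewrite -(subnKC Hki).
    apply: (LB s) => //; first by rewrite Hv.
      by move=> j Hj; exact: (turnsR _ _ _ _ _ _ k j Hj Hki).
    move=> j /andP[H1 _] Hs; rewrite /Ek.
    have Hkj : k < j by rewrite ltn_neqAle H1 andbT; apply/eqP=> Ekj; rewrite Ekj Hs in Esk.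
    by rewrite ltnNge Hkj /= ltnNge (ltnW Hkj).
have toAll : forall a b f, speaker P a b f i = speaker P a b (fun _ => true) i.
  move=> a b f.
  have -> : speaker P a b f i = speaker P a b (Ek f i) i.
    by rewrite /speaker (@views_ext a b f (Ek f i) i) // => j Hj; rewrite /Ek Hj.
  rewrite chain //.
rewrite toAll [RHS]toAll.
have -> : speaker P x y (fun _ => true) i = speaker P x y' (fun _ => true) i.
  rewrite /speaker; congr (a_turn P x _); rewrite -(add0n i); apply: (LA s) => //.
    by move=> j Hj; apply: (turnsR _ _ _ _ _ _ 0); rewrite // subn0.
rewrite /speaker HR // [in RHS]HR //; congr (b_turn P y' _).
rewrite -(add0n i); apply: (LB s) => //.
by move=> j Hj; apply: (turnsR _ _ _ _ _ _ 0); rewrite // subn0.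
Qed.

End Proofs.

Theorem mainTheorem9 (X Y Sigma : Type) (P : protocol X Y Sigma) (N : nat) :
  robust P N -> fixed_order P N.
Proof.
move=> HR.
have C : forall i, i < N -> forall x y e x' y' e',
    speaker P x y e i = speaker P x' y' e' i.
  elim/ltn_ind=> i IH Hi; apply: (@step X Y Sigma P N HR i Hi) => j Hj; apply: IH => //.
  exact: ltn_trans Hj Hi.
case: (classic (inhabited (X * Y))) => [[[x0 y0]]|Hn].
  exists (fun i => speaker P x0 y0 (fun _ => true) i) => x y e i Hi; exact: C.
exists (fun _ => true) => x y; exfalso; exact: Hn (inhabits (x, y)).
Qed.
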